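(* Let $0<a<r$ and let $M_{r,a}$ be the open Möbius strip covered by two charts with coordinates $(\varphi,\tau)$, $\tau\in(-a,a)$, related on overlaps by $(\varphi,\tau)=(\bar\varphi,\bar\tau)$ for $\bar\varphi\in(0,\pi)$ and $(\varphi,\tau)=(\bar\varphi-2\pi,-\bar\tau)$ for $\bar\varphi\in(\pi,2\pi)$ (embedded in $\mathbb{R}^3$ as $((r+\tau\cos\frac\varphi2)\cos\varphi,(r+\tau\cos\frac\varphi2)\sin\varphi,\tau\sin\frac\varphi2)$). Put $g(\varphi,\tau)=(r+\tau\cos\frac\varphi2)^2+\frac{\tau^2}{4}$ and $k(\varphi,\tau)=4\cos\frac\varphi2\,(r+\tau\cos\frac\varphi2)+\tau$, and let $\varepsilon=(\varepsilon_\varphi\omega^\varphi+\varepsilon_\tau\omega^\tau)\wedge dt$ with $\varepsilon_\varphi=\tfrac12\dot\varphi^2\tau\sin\frac\varphi2(r+\tau\cos\frac\varphi2)-\tfrac12\dot\varphi\dot\tau\,k-g\ddot\varphi$, $\varepsilon_\tau=\tfrac14\dot\varphi^2k-\ddot\tau$. Then $\varepsilon$ is a globally defined, globally variational source form on $\mathbb{R}\times T^2M_{r,a}$, and $\lambda=\mathscr L\,dt$ with $$\mathscr L=-\tfrac12\dot\varphi^3\tau\sin\tfrac\varphi2\big(r+\tau\cos\tfrac\varphi2\big)t+\tfrac14\dot\varphi^2\dot\tau\,k\,t+g\dot\varphi\ddot\varphi\,t+\dot\tau\ddot\tau\,t+g\dot\varphi^2+\dot\tau^2$$ is a global Lagrange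 function on $\mathbb{R}\times T^2M_{r,a}$ with $E_\lambda=\varepsilon$.
   Context: For a $2$-manifold $M$ with local coordinates $(q^1,q^2)$, $\mathbb{R}\times T^2M$ has coordinates $(t,q^i,\dot q^i,\ddot q^i)$; contact forms $\omega^{i}=dq^i-\dot q^i dt$. A source form is $\varepsilon=\sum_i\varepsilon_i\omega^i\wedge dt$. For a (possibly second-order) Lagrange function $\mathscr L(t,q,\dot q,\ddot q)$, the Euler–Lagrange form is $E_\lambda=\sum_iE_i(\mathscr L)\omega^i\wedge dt$ with $E_i(\mathscr L)=\partial\mathscr L/\partial q^i-\frac{d}{dt}\partial\mathscr L/\partial\dot q^i+\frac{d^2}{dt^2}\partial\mathscr L/\partial\ddot q^i$, $d/dt$ the total derivative. Globally variational: there is a Lagrange function defined on all of the jet space whose Euler–Lagrange form is $\varepsilon$. *)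

(* Defs.v *)
From Stdlib Require Import Reals.
Open Scope R_scope.

(* A point of R x T^2 M in chart coordinates (t, phi, tau, phi', tau', phi'', tau''). *)
Record jet := mkJet {
  jt : R; jphi : R; jtau : R; jphid : R; jtaud : R; jphidd : R; jtaudd : R }.

Inductive coord := Cphi | Ctau | Cphid | Ctaud | Cphidd | Ctaudd.

Definition shift (c : coord) (h : R) (x : jet) : jet :=
  match c with
  | Cphi   => mkJet (jt x) (jphi x + h) (jtau x) (jphid x) (jtaud x) (jphidd x) (jtaudd x)
  | Ctau   => mkJet (jt x) (jphi x) (jtau x + h) (jphid x) (jtaud x) (jphidd x) (jtaudd x)
  | Cphid  => mkJet (jt x) (jphi x) (jtau x) (jphid x + h) (jtaud x) (jphidd x) (jtaudd x)
  | Ctaud  => mkJet (jt x) (jphi x) (jtau x) (jphid x) (jtaud x + h) (jphidd x) (jtaudd x)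
  | Cphidd => mkJet (jt x) (jphi x) (jtau x) (jphid x) (jtaud x) (jphidd x + h) (jtaudd x)
  | Ctaudd => mkJet (jt x) (jphi x) (jtau x) (jphid x) (jtaud x) (jphidd x) (jtaudd x + h)
  end.

Definition is_partial (D : R -> R -> Prop) (F : jet -> R) (c : coord) (G : jet -> R) : Prop :=
  forall x, D (jphi x) (jtau x) -> derivable_pt_lim (fun h => F (shift c h x)) 0 (G x).

Definition chart_bar (a : R) (phi tau : R) : Prop := 0 < phi < 2 * PI /\ - a < tau < a.
Definition chart_unbar (a : R) (phi tau : R) : Prop := - PI < phi < PI /\ - a < tau < a.

(* Transition on the part of the overlap with phibar in (pi, 2pi), prolonged to jets:
   (phi, tau) = (phibar - 2 pi, - taubar).  On phibar in (0,pi) it is the identity. *)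
Definition transition (x : jet) : jet :=
  mkJet (jt x) (jphi x - 2 * PI) (- jtau x) (jphid x) (- jtaud x) (jphidd x) (- jtaudd x).

Definition gfun (r phi tau : R) : R := (r + tau * cos (phi / 2)) ^ 2 + tau ^ 2 / 4.
Definition kfun (r phi tau : R) : R := 4 * cos (phi / 2) * (r + tau * cos (phi / 2)) + tau.

Definition eps_phi (r : R) (x : jet) : R :=
  let p := jphi x in let q := jtau x in
  / 2 * jphid x ^ 2 * q * sin (p / 2) * (r + q * cos (p / 2))
  - / 2 * jphid x * jtaud x * kfun r p q
  - gfun r p q * jphidd x.
Definition eps_tau (r : R) (x : jet) : R :=
  / 4 * jphid x ^ 2 * kfun r (jphi x) (jtau x) - jtaudd x.

Definition Lag (r : R) (x : jet) : R :=
  let t := jt x in let p := jphi x in let q := jtau x in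
  let pd := jphid x in let qd := jtaud x in
  let pdd := jphidd x in let qdd := jtaudd x in
  - / 2 * pd ^ 3 * q * sin (p / 2) * (r + q * cos (p / 2)) * t
  + / 4 * pd ^ 2 * qd * kfun r p q * t
  + gfun r p q * pd * pdd * t
  + qd * qdd * t
  + gfun r p q * pd ^ 2
  + qd ^ 2.

Definition curve4 (f f1 f2 f3 f4 : R -> R) : Prop :=
  forall s, derivable_pt_lim f s (f1 s) /\ derivable_pt_lim f1 s (f2 s) /\
            derivable_pt_lim f2 s (f3 s) /\ derivable_pt_lim f3 s (f4 s).

Definition EL_comp_eq (Lq Lqd Lqdd : jet -> R) (j : R -> jet) (e : jet -> R) : Prop :=
  exists U V V1 : R -> R,
    (forall s, derivable_pt_lim (fun u => Lqd (j u)) s (U s)) /\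
    (forall s, derivable_pt_lim (fun u => Lqdd (j u)) s (V s)) /\
    (forall s, derivable_pt_lim V s (V1 s)) /\
    (forall s, Lq (j s) - U s + V1 s = e (j s)).

(* E_lambda = eps on the chart with domain D (L, eps written in that chart's coordinates):
   the partial derivatives of L exist, and for every curve in the chart domain the
   Euler-Lagrange expressions along its prolongation equal the components of eps. *)
Definition EL_equals (D : R -> R -> Prop) (L ephi etau : jet -> R) : Prop :=
  exists Lp Lq Lpd Lqd Lpdd Lqdd : jet -> R,
    is_partial D L Cphi Lp /\ is_partial D L Ctau Lq /\
    is_partial D L Cphid Lpd /\ is_partial D L Ctaud Lqd /\
    is_partial D L Cphidd Lpdd /\ is_partial D L Ctaudd Lqdd /\
    forall p p1 p2 p3 p4 q q1 q2 q3 q4 : R -> R,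
      curve4 p p1 p2 p3 p4 -> curve4 q q1 q2 q3 q4 ->
      (forall s, D (p s) (q s)) ->
      let j := fun s => mkJet s (p s) (q s) (p1 s) (q1 s) (p2 s) (q2 s) in
      EL_comp_eq Lp Lpd Lpdd j ephi /\ EL_comp_eq Lq Lqd Lqdd j etau.

(* Main.v *)
Require Import Defs.
From Stdlib Require Import Reals.
From Stdlib Require Import Lra.
From Coquelicot Require Import Coquelicot.
Open Scope R_scope.

Definition Wf r p q := r + q * cos (p / 2).
Definition Af r p q := q * sin (p / 2) * Wf r p q.
Definition Ap r p q := q * cos (p / 2) * Wf r p q / 2 - q ^ 2 * sin (p / 2) ^ 2 / 2.
Definition Aq r p q := sin (p / 2) * Wf r p q + q * sin (p / 2) * cos (p / 2).
Definition kp r p q := - 2 * sin (p / 2) * Wf r p q - 2 * q * cos (p / 2) * sin (p / 2).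
Definition kq (r p q : R) := 4 * cos (p / 2) ^ 2 + 1.
Definition gp r p q := - Wf r p q * q * sin (p / 2).
Definition gq r p q := 2 * Wf r p q * cos (p / 2) + q / 2.
Definition gpp r p q := q ^ 2 * sin (p / 2) ^ 2 / 2 - Wf r p q * q * cos (p / 2) / 2.
Definition gpq r p q := - q * cos (p / 2) * sin (p / 2) - Wf r p q * sin (p / 2).
Definition gqq (r p q : R) := 2 * cos (p / 2) ^ 2 + / 2.

Definition Lp r (x : jet) : R :=
  let t := jt x in let p := jphi x in let q := jtau x in
  let pd := jphid x in let qd := jtaud x in
  let pdd := jphidd x in let qdd := jtaudd x in
  - / 2 * pd ^ 3 * t * Ap r p q + / 4 * pd ^ 2 * qd * t * kp r p q
  + gp r p q * pd * pdd * t + gp r p q * pd ^ 2.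
Definition Lq r (x : jet) : R :=
  let t := jt x in let p := jphi x in let q := jtau x in
  let pd := jphid x in let qd := jtaud x in
  let pdd := jphidd x in let qdd := jtaudd x in
  - / 2 * pd ^ 3 * t * Aq r p q + / 4 * pd ^ 2 * qd * t * kq r p q
  + gq r p q * pd * pdd * t + gq r p q * pd ^ 2.
Definition Lpd r (x : jet) : R :=
  let t := jt x in let p := jphi x in let q := jtau x in
  let pd := jphid x in let qd := jtaud x in
  let pdd := jphidd x in let qdd := jtaudd x in
  - 3 / 2 * pd ^ 2 * Af r p q * t + / 2 * pd * qd * kfun r p q * t
  + gfun r p q * pdd * t + 2 * gfun r p q * pd.
Definition Lqd r (x : jet) : R :=
  let t := jt x in let p := jphi x in let q := jtau x in
  let pd := jphid x in let qd := jtaud x in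
  let pdd := jphidd x in let qdd := jtaudd x in
  / 4 * pd ^ 2 * kfun r p q * t + qdd * t + 2 * qd.
Definition Lpdd r (x : jet) : R := gfun r (jphi x) (jtau x) * jphid x * jt x.
Definition Lqdd (r : R) (x : jet) : R := jtaud x * jt x.

Lemma DerEq (f f1 : R -> R) : (forall s, derivable_pt_lim f s (f1 s)) ->
  forall s, Derive (fun x => f x) s = f1 s.
Proof. intros H s. apply is_derive_unique. apply is_derive_Reals. apply H. Qed.

Lemma ExD (f f1 : R -> R) : (forall s, derivable_pt_lim f s (f1 s)) ->
  forall s, ex_derive (fun x => f x) s.
Proof. intros H s. exists (f1 s). apply is_derive_Reals. apply H. Qed.

Ltac fixeq := match goal with |- @eq _ ?a ?b => change (@eq R a b) end.
Ltac unf := unfold Lag, Lp, Lq, Lpd, Lqd, Lpdd, Lqdd, eps_phi, eps_tau,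
  Af, Ap, Aq, kp, kq, gp, gq, gpp, gpq, gqq, Wf, gfun, kfun, shift; simpl.

Lemma part (r : R) (D : R -> R -> Prop) c G :
  (forall x, is_derive (fun h => Lag r (shift c h x)) 0 (G x)) -> is_partial D (Lag r) c G.
Proof. intros H x _. apply is_derive_Reals. apply H. Qed.

Lemma EL_all r D : EL_equals D (Lag r) (eps_phi r) (eps_tau r).
Proof.
  exists (Lp r), (Lq r), (Lpd r), (Lqd r), (Lpdd r), (Lqdd r).
  do 6 (split; [apply part; intro x; destruct x; unf; auto_derive; [auto| unf; rewrite ?Rplus_0_r; unfold Rdiv; fixeq; field]|]).
  intros p p1 p2 p3 p4 q q1 q2 q3 q4 Hp Hq _ j.
  assert (Hp0 : forall s, derivable_pt_lim p s (p1 s)) by (intro s; apply Hp).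
  assert (Hp1 : forall s, derivable_pt_lim p1 s (p2 s)) by (intro s; apply Hp).
  assert (Hp2 : forall s, derivable_pt_lim p2 s (p3 s)) by (intro s; apply Hp).
  assert (Hp3 : forall s, derivable_pt_lim p3 s (p4 s)) by (intro s; apply Hp).
  assert (Hq0 : forall s, derivable_pt_lim q s (q1 s)) by (intro s; apply Hq).
  assert (Hq1 : forall s, derivable_pt_lim q1 s (q2 s)) by (intro s; apply Hq).
  assert (Hq2 : forall s, derivable_pt_lim q2 s (q3 s)) by (intro s; apply Hq).
  assert (Hq3 : forall s, derivable_pt_lim q3 s (q4 s)) by (intro s; apply Hq).
  clear Hp Hq.
  split.
  - set (g := fun s => gfun r (p s) (q s)).
    set (k := fun s => kfun r (p s) (q s)).
    set (A := fun s => Af r (p s) (q s)).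
    set (G1 := fun s => gp r (p s) (q s) * p1 s + gq r (p s) (q s) * q1 s).
    set (G2 := fun s => (gpp r (p s) (q s) * p1 s + gpq r (p s) (q s) * q1 s) * p1 s
       + gp r (p s) (q s) * p2 s + (gpq r (p s) (q s) * p1 s + gqq r (p s) (q s) * q1 s) * q1 s
       + gq r (p s) (q s) * q2 s).
    set (K1 := fun s => kp r (p s) (q s) * p1 s + kq r (p s) (q s) * q1 s).
    set (A1 := fun s => Ap r (p s) (q s) * p1 s + Aq r (p s) (q s) * q1 s).
    exists (fun s => - 3 / 2 * (2 * p1 s * p2 s * A s * s + p1 s ^ 2 * A1 s * s + p1 s ^ 2 * A s)
       + / 2 * ((p2 s * q1 s + p1 s * q2 s) * k s * s + p1 s * q1 s * K1 s * s + p1 s * q1 s * k s)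
       + G1 s * p2 s * s + g s * p3 s * s + g s * p2 s + 2 * G1 s * p1 s + 2 * g s * p2 s).
    exists (fun s => G1 s * p1 s * s + g s * p2 s * s + g s * p1 s).
    exists (fun s => G2 s * p1 s * s + 2 * G1 s * p2 s * s + 2 * G1 s * p1 s + g s * p3 s * s + 2 * g s * p2 s).
    subst j g k A G1 G2 K1 A1.
    split; [|split; [|split]]; intro s.
    + apply is_derive_Reals. unf. auto_derive.
      * repeat split; eauto using ExD.
      * rewrite ?(DerEq _ _ Hp0), ?(DerEq _ _ Hp1), ?(DerEq _ _ Hp2), ?(DerEq _ _ Hq0), ?(DerEq _ _ Hq1), ?(DerEq _ _ Hq2).
        unf. unfold Rdiv. fixeq. field.
    + apply is_derive_Reals. unf. auto_derive.
      * repeat split; eauto using ExD.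
      * rewrite ?(DerEq _ _ Hp0), ?(DerEq _ _ Hp1), ?(DerEq _ _ Hp2), ?(DerEq _ _ Hq0), ?(DerEq _ _ Hq1), ?(DerEq _ _ Hq2).
        unf. unfold Rdiv. fixeq. field.
    + apply is_derive_Reals. unf. auto_derive.
      * repeat split; eauto using ExD.
      * rewrite ?(DerEq _ _ Hp0), ?(DerEq _ _ Hp1), ?(DerEq _ _ Hp2), ?(DerEq _ _ Hq0), ?(DerEq _ _ Hq1), ?(DerEq _ _ Hq2).
        unf. unfold Rdiv. fixeq. field.
    + unf. unfold Rdiv. fixeq. field.
  - exists (fun s => / 4 * (2 * p1 s * p2 s * kfun r (p s) (q s) * s
        + p1 s ^ 2 * (kp r (p s) (q s) * p1 s + kq r (p s) (q s) * q1 s) * s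
        + p1 s ^ 2 * kfun r (p s) (q s)) + q3 s * s + 3 * q2 s).
    exists (fun s => q2 s * s + q1 s).
    exists (fun s => q3 s * s + 2 * q2 s).
    subst j.
    split; [|split; [|split]]; intro s.
    + apply is_derive_Reals. unf. auto_derive.
      * repeat split; eauto using ExD.
      * rewrite ?(DerEq _ _ Hp0), ?(DerEq _ _ Hp1), ?(DerEq _ _ Hp2), ?(DerEq _ _ Hq0), ?(DerEq _ _ Hq1), ?(DerEq _ _ Hq2).
        unf. unfold Rdiv. fixeq. field.
    + apply is_derive_Reals. unf. auto_derive.
      * repeat split; eauto using ExD.
      * rewrite ?(DerEq _ _ Hp0), ?(DerEq _ _ Hp1), ?(DerEq _ _ Hp2), ?(DerEq _ _ Hq0), ?(DerEq _ _ Hq1), ?(DerEq _ _ Hq2).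
        unf. unfold Rdiv. fixeq. field.
    + apply is_derive_Reals. unf. auto_derive.
      * repeat split; eauto using ExD.
      * rewrite ?(DerEq _ _ Hp0), ?(DerEq _ _ Hp1), ?(DerEq _ _ Hp2), ?(DerEq _ _ Hq0), ?(DerEq _ _ Hq1), ?(DerEq _ _ Hq2).
        unf. unfold Rdiv. fixeq. field.
    + unf. unfold Rdiv. fixeq. field.
Qed.

Lemma cos_tr p : cos ((p - 2 * PI) / 2) = - cos (p / 2).
Proof.
  replace ((p - 2 * PI) / 2) with (p / 2 - PI) by field.
  rewrite cos_minus, cos_PI, sin_PI. ring.
Qed.
Lemma sin_tr p : sin ((p - 2 * PI) / 2) = - sin (p / 2).
Proof.
  replace ((p - 2 * PI) / 2) with (p / 2 - PI) by field.
  rewrite sin_minus, cos_PI, sin_PI. ring.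
Qed.

Theorem mainTheorem8 (r a : R) (ha : 0 < a) (har : a < r) :
  (forall x : jet, PI < jphi x < 2 * PI -> - a < jtau x < a ->
     eps_phi r (transition x) = eps_phi r x /\
     eps_tau r (transition x) = - eps_tau r x) /\
  (forall x : jet, PI < jphi x < 2 * PI -> - a < jtau x < a ->
     Lag r (transition x) = Lag r x) /\
  EL_equals (chart_bar a) (Lag r) (eps_phi r) (eps_tau r) /\
  EL_equals (chart_unbar a) (Lag r) (eps_phi r) (eps_tau r).
Proof.
  split; [|split; [|split]].
  - intros [t p q pd qd pdd qdd] _ _.
    unfold eps_phi, eps_tau, transition, gfun, kfun; cbn [jt jphi jtau jphid jtaud jphidd jtaudd].
    rewrite cos_tr, sin_tr. split; fixeq; field.
  - intros [t p q pd qd pdd qdd] _ _.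
    unfold Lag, transition, gfun, kfun; cbn [jt jphi jtau jphid jtaud jphidd jtaudd].
    rewrite cos_tr, sin_tr. fixeq; field.
  - apply EL_all.
  - apply EL_all.
Qed.
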